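(* Let $R$ be a uniform $L$-layered $1$-semifield$^\dagger$, and let $f=\sum_{i=0}^m\alpha_i\lambda^i$ be $a$-primary (of degree $m$) and $g=\sum_{j=0}^n\beta_j\lambda^j$ be $b$-primary (of degree $n$). Then $|\Re(f,g)|\cong_\nu g(a)^m\cong_\nu (a+b)^{mn}\cong_\nu f(b)^n$. If $a<_\nu b$, then $|\Re(f,g)|=\beta_0^m=g(a)^m\cong_\nu b^{mn}=(a+b)^{mn}=f(b)^n$. If $a>_\nu b$, then $|\Re(f,g)|=\alpha_0^n=f(b)^n\cong_\nu a^{mn}=(a+b)^{mn}=g(a)^m$.
   Context: Concretely, $R=R(L,\mathcal{G})$ with $L$ a totally ordered commutative semiring$^\dagger$ (semiring without necessarily a zero) and $\mathcal{G}$ a totally ordered abelian group; elements $x^{[\ell]}$ ($x\in\mathcal{G}$, layer $\ell$), $x^{[k]}y^{[\ell]}=(xy)^{[k\ell]}$, $x^{[k]}+y^{[\ell]}$ equal to $x^{[k]}$ if $x>y$, $y^{[\ell]}$ if $x<y$, $x^{[k+\ell]}$ if $x=y$. $u\cong_\nu v$ means equal $\mathcal{G}$-values; $u<_\nu v$ means smaller $\mathcal{G}$-value. A zero element $\mathbb{0}_R$ is formally adjoined. A polynomial of degree $t$ is monic if its leading coefficient is $\cong_\nu\mathbb{1}_R$; a monic $f$ of degree $t$ is $a$-primary if $f=\lambda^t+\sum_j\alpha_j\lambda^{i_j}$ with $\alpha_j\cong_\nu a^{t-i_j}$. The layered permanent of an $N\times N$ matrix is $|A|=\sum_{\sigma\in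 S_N}\prod_i a_{i,\sigma(i)}$. For $f=\sum_{i=0}^m\alpha_i\lambda^i$, $A_n(f)$ is the $n\times(m+n)$ matrix whose $r$-th row is $(\mathbb{0},\dots,\mathbb{0},\alpha_0,\dots,\alpha_m,\mathbb{0},\dots)$ with $r-1$ leading zeros; the Sylvester matrix is $\Re(f,g)=\binom{A_n(f)}{A_m(g)}$ for $\deg f=m,\deg g=n\ge1$, and the resultant is $|\Re(f,g)|$. *)

(* Defs.v *)
From mathcomp Require Import all_boot all_fingroup.
Set Implicit Arguments. Unset Strict Implicit. Unset Printing Implicit Defensive.

Record toSemiring := ToSemiring {
  Lcar :> Type;
  Ladd : Lcar -> Lcar -> Lcar;
  Lmul : Lcar -> Lcar -> Lcar;
  Lone : Lcar;
  Lle  : Lcar -> Lcar -> bool;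
  LaddA : forall x y z, Ladd x (Ladd y z) = Ladd (Ladd x y) z;
  LaddC : forall x y, Ladd x y = Ladd y x;
  LmulA : forall x y z, Lmul x (Lmul y z) = Lmul (Lmul x y) z;
  LmulC : forall x y, Lmul x y = Lmul y x;
  Lmul1 : forall x, Lmul Lone x = x;
  LmulDl : forall x y z, Lmul (Ladd x y) z = Ladd (Lmul x z) (Lmul y z);
  Lle_refl : forall x, Lle x x;
  Lle_anti : forall x y, Lle x y -> Lle y x -> x = y;
  Lle_trans : forall x y z, Lle x y -> Lle y z -> Lle x z;
  Lle_total : forall x y, Lle x y || Lle y x;
  Lle_add : forall x y z, Lle x y -> Lle (Ladd x z) (Ladd y z)
}.

Record toAbGroup := ToAbGroup {
  Gcar :> Type;
  Gmul : Gcar -> Gcar -> Gcar;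
  Gone : Gcar;
  Ginv : Gcar -> Gcar;
  Glt  : Gcar -> Gcar -> bool;
  GmulA : forall x y z, Gmul x (Gmul y z) = Gmul (Gmul x y) z;
  GmulC : forall x y, Gmul x y = Gmul y x;
  Gmul1 : forall x, Gmul Gone x = x;
  GmulV : forall x, Gmul (Ginv x) x = Gone;
  Glt_irr : forall x, ~~ Glt x x;
  Glt_trans : forall x y z, Glt x y -> Glt y z -> Glt x z;
  Glt_total : forall x y, x <> y -> Glt x y || Glt y x;
  Glt_mul : forall x y z, Glt x y -> Glt (Gmul x z) (Gmul y z)
}.

(* The uniform L-layered 1-semifield R(L,G) with formally adjoined 0:  *)
(*   None          = 0_R                                               *)
(*   Some (x, l)   = x^[l]   (x in G, layer l in L)                    *)
Section Layered.
Variables (L : toSemiring) (G : toAbGroup).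

Definition layered := option (G * L).

Definition rzero : layered := None.
Definition rone : layered := Some (Gone G, Lone L).

Definition rmul (u v : layered) : layered :=
  match u, v with
  | Some (x, k), Some (y, l) => Some (Gmul x y, Lmul k l)
  | _, _ => None
  end.

Definition radd (u v : layered) : layered :=
  match u, v with
  | None, _ => v
  | _, None => u
  | Some (x, k), Some (y, l) =>
      if Glt y x then u
      else if Glt x y then v
      else Some (x, Ladd k l)
  end.

Definition rpow (u : layered) (k : nat) : layered := iter k (rmul u) rone.

Definition nuval (u : layered) : option G :=
  match u with Some (x, _) => Some x | None => None end.

Definition nu_eq (u v : layered) : Prop := nuval u = nuval v.

Definition nu_lt (u v : layered) : bool :=
  match u, v with
  | None, Some _ => true
  | Some (x, _), Some (y, _) => Glt x y
  | _, _ => false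
  end.

(* Polynomials f = sum_{i=0}^m alpha_i λ^i are given by a coefficient
   function alpha : nat -> layered together with their degree m
   (coefficients alpha i for i > m are ignored). *)

Definition peval (alpha : nat -> layered) (m : nat) (x : layered) : layered :=
  \big[radd/rzero]_(i < m.+1) rmul (alpha i) (rpow x i).

(* a-primary of degree m:  f = λ^m + sum_j alpha_{i_j} λ^{i_j} with
   alpha_{i_j} ≅_ν a^{m - i_j}; the constant term is among the i_j,
   the other coefficients may be absent (= 0). *)
Definition primary (a : layered) (alpha : nat -> layered) (m : nat) : Prop :=
  alpha m = rone /\
  nu_eq (alpha 0%N) (rpow a m) /\
  (forall i, (0 < i < m)%N -> alpha i = rzero \/ nu_eq (alpha i) (rpow a (m - i))).

(* Sylvester matrix Re(f,g), of size (m+n) x (m+n) (0-indexed):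
   rows r < n      : alpha (c - r) for r <= c <= r + m, else 0
   rows n + r, r<m : beta  (c - r) for r <= c <= r + n, else 0 *)
Definition sylvester (alpha : nat -> layered) (m : nat)
    (beta : nat -> layered) (n : nat) (i j : 'I_(m + n)) : layered :=
  if (i < n)%N then
    (if (i <= j <= i + m)%N then alpha (j - i)%N else rzero)
  else
    (if (i - n <= j <= i - n + n)%N then beta (j - (i - n))%N else rzero).

Definition lperm (N : nat) (A : 'I_N -> 'I_N -> layered) : layered :=
  \big[radd/rzero]_(s : {perm 'I_N}) \big[rmul/rone]_(i < N) A i (s i).

Definition resultant (alpha : nat -> layered) (m : nat)
    (beta : nat -> layered) (n : nat) : layered :=
  lperm (@sylvester alpha m beta n).

End Layered.
Arguments sylvester {L G} alpha m beta n i j.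
Arguments resultant {L G} alpha m beta n.

(* Main.v *)
Require Import Defs.
From mathcomp Require Import all_boot all_fingroup.
From mathcomp Require Import zify.
From Stdlib Require Import Classical.
Set Implicit Arguments. Unset Strict Implicit. Unset Printing Implicit Defensive.

Section Aux.
Variables (L : toSemiring) (G : toAbGroup).
Notation T := (layered L G).
Notation r0 := (rzero L G).
Notation r1 := (rone L G).
Implicit Types (x y z w : G) (u v : T).

Lemma Glt_irrF x : Glt x x = false.
Proof. by apply/negbTE/Glt_irr. Qed.

Lemma Glt_asym x y : Glt x y -> Glt y x = false.
Proof. move=> h; apply/negbTE/negP => h'; by have := Glt_trans h h'; rewrite Glt_irrF. Qed.

Lemma Geq x y : ~~ Glt x y -> ~~ Glt y x -> x = y.
Proof.
move=> h1 h2; apply: NNPP => ne; have := Glt_total ne.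
by rewrite (negbTE h1) (negbTE h2).
Qed.

Lemma Glt_le_trans x y z : Glt x y -> ~~ Glt z y -> Glt x z.
Proof.
move=> h1 h2; case: (classic (y = z)) => [<- //|ne].
case/orP: (Glt_total ne) => h; first exact: Glt_trans h1 h.
by rewrite h in h2.
Qed.

Lemma Gmul1r x : Gmul x (Gone G) = x.
Proof. by rewrite GmulC Gmul1. Qed.

Lemma Glt_mull x y z : Glt x y -> Glt (Gmul z x) (Gmul z y).
Proof. by move=> h; rewrite ![Gmul z _]GmulC; apply: Glt_mul. Qed.

Lemma Glt_mull_cancel x y z : Glt (Gmul z x) (Gmul z y) -> Glt x y.
Proof.
move=> h; have := Glt_mull (Ginv z) h.
by rewrite !GmulA GmulV !Gmul1.
Qed.

Definition olt (p q : option G) : bool :=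
  match p, q with
  | None, Some _ => true
  | Some x, Some y => Glt x y
  | _, _ => false
  end.
Definition ole (p q : option G) : bool := ~~ olt q p.
Definition omul (p q : option G) : option G :=
  match p, q with Some x, Some y => Some (Gmul x y) | _, _ => None end.
Definition opow (p : option G) (k : nat) : option G := iter k (omul p) (Some (Gone G)).
Definition omax (p q : option G) := if olt p q then q else p.

Implicit Types (p q s t : option G).

Lemma ole_refl p : ole p p.
Proof. by case: p => [x|] //=; rewrite /ole /= Glt_irrF. Qed.

Lemma olt_trans p q s : olt p q -> olt q s -> olt p s.
Proof. case: p q s => [x|] [y|] [z|] //=; exact: Glt_trans. Qed.

Lemma olt_le_trans p q s : olt p q -> ole q s -> olt p s.
Proof. rewrite /ole; case: p q s => [x|] [y|] [z|] //=; exact: Glt_le_trans. Qed.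

Lemma ole_lt_trans p q s : ole p q -> olt q s -> olt p s.
Proof.
rewrite /ole; case: p q s => [x|] [y|] [z|] //= h1 h2.
apply: NNPP => /negP h3; case: (classic (x = z)) => [e|ne].
  by subst; rewrite h2 in h1.
case/orP: (Glt_total ne) => h; first by rewrite h in h3.
by rewrite (Glt_trans h2 h) in h1.
Qed.

Lemma ole_trans p q s : ole p q -> ole q s -> ole p s.
Proof. move=> h1 h2; apply/negP => h3. have := olt_le_trans h3 h1. by move/negP: h2. Qed.

Lemma oltW p q : olt p q -> ole p q.
Proof. rewrite /ole; case: p q => [x|] [y|] //= h; by rewrite Glt_asym. Qed.

Lemma ole_anti p q : ole p q -> ole q p -> p = q.
Proof. rewrite /ole; case: p q => [x|] [y|] //= h1 h2; by rewrite (Geq h2 h1). Qed.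

Lemma olt_neq p q : olt p q -> q <> None.
Proof. by case: p q => [x|] [y|]. Qed.

Lemma ole_None p : ole None p.
Proof. by case: p. Qed.

Lemma oleNlt p q : ole p q = ~~ olt q p. Proof. by []. Qed.

Lemma ole_total p q : ole p q || ole q p.
Proof.
rewrite /ole; case: p q => [x|] [y|] //=.
by case h: (Glt y x) => //=; rewrite Glt_asym.
Qed.

Lemma omulC p q : omul p q = omul q p.
Proof. by case: p q => [x|] [y|] //=; rewrite GmulC. Qed.

Lemma omulA p q s : omul p (omul q s) = omul (omul p q) s.
Proof. by case: p q s => [x|] [y|] [z|] //=; rewrite GmulA. Qed.

Lemma omul1 p : omul (Some (Gone G)) p = p.
Proof. by case: p => [x|] //=; rewrite Gmul1. Qed.

Lemma omulr1 p : omul p (Some (Gone G)) = p.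
Proof. by rewrite omulC omul1. Qed.

Lemma ole_mul p q s t : ole p q -> ole s t -> ole (omul p s) (omul q t).
Proof.
rewrite /ole; case: p q s t => [x|] [y|] [z|] [w|] //= h1 h2.
apply/negP => h.
have h3 : Glt (Gmul y w) (Gmul x w).
  apply: Glt_le_trans h _; apply/negP => h4.
  by move/Glt_mull_cancel: h4; apply/negP.
by move/Glt_mul: h3 => /(_ (Ginv w)); rewrite -!GmulA [Gmul w _]GmulC GmulV !Gmul1r; apply/negP.
Qed.

Lemma olt_mul p q s t : olt p q -> ole s t -> t <> None -> olt (omul p s) (omul q t).
Proof.
rewrite /ole; case: p q s t => [x|] [y|] [z|] [w|] //= h1 h2 _.
apply: (@Glt_le_trans _ (Gmul y z)); first exact: Glt_mul.
apply/negP => h; move/Glt_mull_cancel: h; exact/negP.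
Qed.

Lemma opowS p k : opow p k.+1 = omul p (opow p k). Proof. by []. Qed.

Lemma opowD p i j : opow p (i + j) = omul (opow p i) (opow p j).
Proof. elim: i => [|i IH]; first by rewrite add0n omul1. by rewrite addSn !opowS IH omulA. Qed.

Lemma opowM p i j : opow p (i * j) = opow (opow p i) j.
Proof.
elim: j => [|j IH]; first by rewrite muln0.
by rewrite mulnS opowD IH.
Qed.

Lemma opow_neq p k : p <> None -> opow p k <> None.
Proof. case: p => [x|] // _; by elim: k => [|k IH] //=; case: (opow _ k) IH. Qed.

Lemma opow_None k : (0 < k)%N -> opow None k = None.
Proof. by case: k. Qed.

Lemma ole_pow p q k : ole p q -> ole (opow p k) (opow q k).
Proof. move=> h; elim: k => [|k IH]; first exact: ole_refl. by rewrite !opowS; apply: ole_mul. Qed.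

Lemma olt_pow p q k : olt p q -> (0 < k)%N -> olt (opow p k) (opow q k).
Proof.
move=> h; elim: k => [|k IH] // _; rewrite !opowS.
case: k IH => [|k] IH; first by rewrite /= !omulr1.
apply: olt_mul => //; first exact: oltW (IH isT).
exact: opow_neq (olt_neq h).
Qed.

Lemma omax_l p q : ole p (omax p q).
Proof. rewrite /omax; case: ifP => h; [exact: oltW|exact: ole_refl]. Qed.

Lemma omax_r p q : ole q (omax p q).
Proof. rewrite /omax; case: ifP => h; first exact: ole_refl. by rewrite /ole h. Qed.

Lemma omax_lub p q s : ole p s -> ole q s -> ole (omax p q) s.
Proof. by rewrite /omax; case: ifP. Qed.

Lemma omax_lt p q s : olt p s -> olt q s -> olt (omax p q) s.
Proof. by rewrite /omax; case: ifP. Qed.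

Lemma omaxC p q : omax p q = omax q p.
Proof.
rewrite /omax; case: ifP => h1; case: ifP => h2 //.
  by have := olt_trans h1 h2; case: p {h1 h2} => [x|] //=; rewrite Glt_irrF.
apply: ole_anti; by rewrite /ole ?h1 ?h2.
Qed.

Lemma omax_eql p q : ole q p -> omax p q = p.
Proof. by rewrite /omax /ole => /negbTE ->. Qed.

Lemma omax_eqr p q : olt p q -> omax p q = q.
Proof. by rewrite /omax => ->. Qed.

Lemma pow_bound p q s i j : ole p s -> ole q s ->
  ole (omul (opow p i) (opow q j)) (opow s (i + j)).
Proof. move=> h1 h2; rewrite opowD; apply: ole_mul; exact: ole_pow. Qed.

Lemma pow_strict p q i j : olt q p -> (0 < j)%N ->
  olt (omul (opow p i) (opow q j)) (opow p (i + j)).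
Proof.
move=> h hj; rewrite opowD omulC [omul (opow p i) _]omulC.
apply: olt_mul; [exact: olt_pow|exact: ole_refl|exact: opow_neq (olt_neq h)].
Qed.

End Aux.


Section Lay.
Variables (L : toSemiring) (G : toAbGroup).
Notation T := (layered L G).
Notation r0 := (rzero L G).
Notation r1 := (rone L G).
Implicit Types (u v w : T).
Notation rad := (@radd L G).
Notation rmu := (@rmul L G).

Lemma rmulC u v : rmul u v = rmul v u.
Proof. by case: u v => [[x k]|] [[y l]|] //=; rewrite GmulC LmulC. Qed.

Lemma rmulA u v w : rmul u (rmul v w) = rmul (rmul u v) w.
Proof. by case: u v w => [[x k]|] [[y l]|] [[z p]|] //=; rewrite GmulA LmulA. Qed.

Lemma rmul1 u : rmul r1 u = u.
Proof. by case: u => [[x k]|] //=; rewrite Gmul1 Lmul1. Qed.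

Lemma rmulr1 u : rmul u r1 = u.
Proof. by rewrite rmulC rmul1. Qed.

Lemma rmul0 u : rmul r0 u = r0. Proof. by []. Qed.
Lemma rmulr0 u : rmul u r0 = r0. Proof. by case: u => [[]|]. Qed.

Lemma nuval_rmul u v : nuval (rmul u v) = omul (nuval u) (nuval v).
Proof. by case: u v => [[x k]|] [[y l]|]. Qed.

Lemma nuval_rone : nuval r1 = Some (Gone G). Proof. by []. Qed.

Lemma nuval_rpow u k : nuval (rpow u k) = opow (nuval u) k.
Proof. elim: k => [|k IH] //=; by rewrite nuval_rmul IH. Qed.

Lemma nuval_radd u v : nuval (radd u v) = omax (nuval u) (nuval v).
Proof.
case: u v => [[x k]|] [[y l]|] //=; rewrite /omax /=.
case: ifP => h; first by rewrite Glt_asym.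
by case: ifP.
Qed.

Lemma nu_ltE u v : nu_lt u v = olt (nuval u) (nuval v).
Proof. by case: u v => [[x k]|] [[y l]|]. Qed.

Lemma radd_ltl u v : nu_lt v u -> radd u v = u.
Proof. by case: u v => [[x k]|] [[y l]|] //= ->. Qed.

Lemma radd_ltr u v : nu_lt u v -> radd u v = v.
Proof. by case: u v => [[x k]|] [[y l]|] //= h; rewrite Glt_asym // h. Qed.

Lemma rpowD u i j : rpow u (i + j) = rmul (rpow u i) (rpow u j).
Proof. elim: i => [|i IH]; first by rewrite add0n rmul1. by rewrite addSn /= IH rmulA. Qed.

Lemma rpowM u i j : rpow u (i * j) = rpow (rpow u i) j.
Proof. elim: j => [|j IH]; first by rewrite muln0. by rewrite mulnS rpowD IH. Qed.

Section Sums.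
Variables (I : eqType) (F : I -> T).

Lemma sum_le (r : seq I) X :
  (forall i, i \in r -> ole (nuval (F i)) X) ->
  ole (nuval (\big[rad/r0]_(i <- r) F i)) X.
Proof.
elim: r => [|x r IH] h; first by rewrite big_nil; apply: ole_None.
rewrite big_cons nuval_radd; apply: omax_lub.
  by apply: h; rewrite mem_head.
by apply: IH => i hi; apply: h; rewrite in_cons hi orbT.
Qed.

Lemma sum_ge (r : seq I) i0 : i0 \in r ->
  ole (nuval (F i0)) (nuval (\big[rad/r0]_(i <- r) F i)).
Proof.
elim: r => [|x r IH] //; rewrite in_cons big_cons nuval_radd => /orP [/eqP ->|h].
  exact: omax_l.
exact: ole_trans (IH h) (omax_r _ _).
Qed.

Lemma sum_lt (r : seq I) w :
  nu_lt r0 w -> (forall i, i \in r -> nu_lt (F i) w) ->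
  nu_lt (\big[rad/r0]_(i <- r) F i) w.
Proof.
move=> h0; elim: r => [|x r IH] h; first by rewrite big_nil.
rewrite big_cons nu_ltE nuval_radd; apply: omax_lt; rewrite -nu_ltE.
  by apply: h; rewrite mem_head.
by apply: IH => i hi; apply: h; rewrite in_cons hi orbT.
Qed.

Lemma radd0r u : radd u r0 = u. Proof. by case: u => [[]|]. Qed.

Lemma sum_dom (r : seq I) i0 : uniq r -> i0 \in r ->
  (forall i, i \in r -> i != i0 -> nu_lt (F i) (F i0)) ->
  \big[rad/r0]_(i <- r) F i = F i0.
Proof.
elim: r => [|x r IH] //= /andP [xr ur]; rewrite big_cons in_cons => hi h.
case: (eqVneq x i0) => [e|ne].
  subst x; case: r IH xr ur h {hi} => [|y r] IH xr ur h.
    by rewrite big_nil radd0r.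
  apply: radd_ltl; apply: sum_lt.
    have := h y; rewrite !in_cons eqxx orbT => /(_ isT).
    have -> : (y != i0) by apply/eqP => e; move: xr; rewrite e mem_head.
    by move/(_ isT); rewrite !nu_ltE; case: (nuval (F y)) (nuval (F i0)) => [?|] [?|].
  move=> i hi; apply: h; first by rewrite in_cons hi orbT.
  by apply/eqP => e; move: xr; rewrite -e hi.
have hr : i0 \in r by move: hi; rewrite eq_sym (negbTE ne).
rewrite IH //.
  by apply: radd_ltr; apply: h => //; rewrite mem_head.
by move=> i ir; apply: h; rewrite in_cons ir orbT.
Qed.

End Sums.
End Lay.


Section Prod.
Variables (L : toSemiring) (G : toAbGroup).
Notation T := (layered L G).
Notation r0 := (rzero L G).
Notation r1 := (rone L G).
Notation rad := (@radd L G).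
Notation rmu := (@rmul L G).
Implicit Types (u v w : T).

Section P.
Variables (I : eqType).

Lemma prod_zero (r : seq I) (F : I -> T) i0 : i0 \in r -> F i0 = r0 ->
  \big[rmu/r1]_(i <- r) F i = r0.
Proof.
elim: r => [|x r IH] //; rewrite in_cons big_cons => /orP [/eqP <- -> //|h e].
by rewrite IH // rmulr0.
Qed.

Lemma prod_count (r : seq I) (P : pred I) x :
  \big[rmu/r1]_(i <- r) (if P i then x else r1) = rpow x (count P r).
Proof.
elim: r => [|y r IH]; first by rewrite big_nil.
rewrite big_cons IH (_ : count P (y :: r) = P y + count P r) //; case: (P y); first by []. by rewrite add0n rmul1.
Qed.

Lemma prod_bound (r : seq I) (F : I -> T) (E1 E2 : I -> nat) A B :
  (forall i, ole (nuval (F i)) (omul (opow A (E1 i)) (opow B (E2 i)))) ->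
  ole (nuval (\big[rmu/r1]_(i <- r) F i))
      (omul (opow A (\sum_(i <- r) E1 i)) (opow B (\sum_(i <- r) E2 i))).
Proof.
move=> h; elim: r => [|x r IH]; first by rewrite !big_nil /= Gmul1; apply: ole_refl.
rewrite !big_cons nuval_rmul !opowD.
have -> : omul (omul (opow A (E1 x)) (opow A (\sum_(j <- r) E1 j)))
     (omul (opow B (E2 x)) (opow B (\sum_(j <- r) E2 j))) =
  omul (omul (opow A (E1 x)) (opow B (E2 x)))
     (omul (opow A (\sum_(j <- r) E1 j)) (opow B (\sum_(j <- r) E2 j))).
  by rewrite !omulA; congr omul; rewrite -!omulA; congr omul; rewrite omulC.
exact: ole_mul.
Qed.
End P.

Section Prim.
Variables (a : T) (alpha : nat -> T) (m : nat).
Hypothesis pa : primary a alpha m.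

Lemma prim_m : alpha m = r1. Proof. by case: pa. Qed.
Lemma prim_0 : nuval (alpha 0) = opow (nuval a) m.
Proof. by case: pa => _ [h _]; rewrite h nuval_rpow. Qed.

Lemma prim_le k : (k <= m)%N -> ole (nuval (alpha k)) (opow (nuval a) (m - k)).
Proof.
move=> hk; case: (posnP k) => [->|k0]; first by rewrite subn0 prim_0 ole_refl.
case: (ltnP k m) => km.
  case: pa => _ [_ h]; case: (h k); first by rewrite k0 km.
    by move=> ->; apply: ole_None.
  by move=> ->; rewrite nuval_rpow ole_refl.
have -> : k = m by apply/eqP; rewrite eqn_leq hk km.
by rewrite prim_m subnn ole_refl.
Qed.

Lemma peval_term_le x (j : nat) : (j <= m)%N ->
  ole (nuval (rmul (alpha j) (rpow x j)))
      (omul (opow (nuval a) (m - j)) (opow (nuval x) j)).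
Proof. move=> hj; rewrite nuval_rmul nuval_rpow; apply: ole_mul; [exact: prim_le|exact: ole_refl]. Qed.

Lemma peval_nu x : nuval (peval alpha m x) = opow (omax (nuval a) (nuval x)) m.
Proof.
apply: ole_anti.
  apply: sum_le => j _.
  apply: ole_trans (peval_term_le x (ltn_ord j)) _.
  have := pow_bound (m - j) j (omax_l (nuval a) (nuval x)) (omax_r (nuval a) (nuval x)).
  by rewrite subnK // -ltnS.
case: (boolP (olt (nuval a) (nuval x))) => h.
  rewrite omax_eqr //.
  apply: ole_trans (sum_ge _ (mem_index_enum (@ord_max m))).
  by rewrite /= prim_m rmul1 nuval_rpow ole_refl.
rewrite omax_eql //.
apply: ole_trans (sum_ge _ (mem_index_enum (@ord0 m))).
by rewrite /= rmulr1 prim_0 ole_refl.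
Qed.

Lemma peval_lt x : olt (nuval x) (nuval a) -> peval alpha m x = alpha 0.
Proof.
move=> h; rewrite /peval (@sum_dom _ _ _ _ _ (@ord0 m)) ?index_enum_uniq ?mem_index_enum //=.
  by rewrite rmulr1.
move=> j _ nj; rewrite nu_ltE /= rmulr1 prim_0.
apply: ole_lt_trans (peval_term_le x (ltn_ord j)) _.
have j0 : (0 < j)%N by rewrite lt0n; apply: contra nj => /eqP e; apply/eqP/val_inj.
have := pow_strict (m - j) h j0; by rewrite subnK // -ltnS.
Qed.

Lemma peval_gt x : olt (nuval a) (nuval x) -> peval alpha m x = rpow x m.
Proof.
move=> h; rewrite /peval (@sum_dom _ _ _ _ _ (@ord_max m)) ?index_enum_uniq ?mem_index_enum //=.
  by rewrite prim_m rmul1.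
move=> j _ nj; rewrite nu_ltE /= prim_m rmul1 nuval_rpow.
apply: ole_lt_trans (peval_term_le x (ltn_ord j)) _.
have j0 : (0 < m - j)%N.
  rewrite subn_gt0 ltn_neqAle -ltnS ltn_ord andbT; apply: contra nj => /eqP e; by apply/eqP/val_inj.
rewrite omulC; have := pow_strict j h j0; by rewrite subnKC // -ltnS.
Qed.
End Prim.
End Prod.


Lemma size_ie N : size (index_enum 'I_N) = N.
Proof. rewrite -(count_predT (index_enum _)) -size_filter deprecated_filter_index_enum -cardE -sum1_card.
by rewrite big_const_ord iter_addn_0 mul1n. Qed.

Lemma cnt_lt m n : count (fun i : 'I_(m+n) => (i < n)%N) (index_enum _) = n.
Proof.
rewrite -size_filter deprecated_filter_index_enum -cardE -sum1_card.
rewrite -(big_ord_widen (m + n) (fun _ => 1)) ?leq_addl //.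
by rewrite big_const_ord iter_addn_0 mul1n.
Qed.

Lemma cnt_ge m n : count (fun i : 'I_(m+n) => ~~ (i < n)%N) (index_enum _) = m.
Proof.
have := count_predC (fun i : 'I_(m+n) => (i < n)%N) (index_enum _).
rewrite cnt_lt size_ie => h; apply/eqP; by rewrite -(eqn_add2l n) h addnC.
Qed.

Lemma sum_if_count (I : Type) (r : seq I) (P : pred I) x :
  \sum_(i <- r) (if P i then x else 0) = x * count P r.
Proof.
elim: r => [|y r IH]; first by rewrite big_nil muln0.
by rewrite big_cons IH /=; case: (P y); rewrite /= ?mulnDr ?muln1.
Qed.

Section Res.
Variables (L : toSemiring) (G : toAbGroup).
Notation T := (layered L G).
Notation r0 := (rzero L G).
Notation r1 := (rone L G).
Notation rad := (@radd L G).
Notation rmu := (@rmul L G).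
Variables (a b : T) (alpha beta : nat -> T) (m n : nat).
Hypotheses (m0 : (0 < m)%N) (n0 : (0 < n)%N).
Hypotheses (pa : primary a alpha m) (pb : primary b beta n).
Notation A := (nuval a).
Notation B := (nuval b).
Notation M := (sylvester alpha m beta n).
Implicit Types s : {perm 'I_(m + n)}.

Definition band (i j : nat) : bool :=
  if (i < n)%N then (i <= j <= i + m)%N else (i - n <= j <= i - n + n)%N.
Definition K (i : nat) := if (i < n)%N then m else 0.
Definition ee (i j : nat) := K i + i - j.
Definition fe (i j : nat) := if (i < n)%N then ee i j else 0.
Definition ge (i j : nat) := if (i < n)%N then 0 else ee i j.

Definition term (s : {perm 'I_(m + n)}) := \big[rmu/r1]_(i < m + n) M i (s i).
Definition Sf (s : {perm 'I_(m + n)}) := \sum_(i < m + n) fe i (s i).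
Definition Sg (s : {perm 'I_(m + n)}) := \sum_(i < m + n) ge i (s i).

Lemma M_out (i j : 'I_(m + n)) : ~~ band i j -> M i j = r0.
Proof. by rewrite /band /sylvester; case: ifP => _ /negbTE ->. Qed.

Lemma M_bound (i j : 'I_(m + n)) : band i j ->
  ole (nuval (M i j)) (omul (opow A (fe i j)) (opow B (ge i j))).
Proof.
rewrite /band /sylvester /fe /ge /ee /K; case: ifP => hi hb; rewrite hb.
  rewrite omulr1; move/andP: hb => [h1 h2].
  have := prim_le pa (k := j - i) (ltac:(lia)).
  by rewrite (_ : m - (j - i) = m + i - j) //; lia.
rewrite omul1 add0n; move/andP: hb => [h1 h2]; move/negbT: hi; rewrite -leqNgt => hi.
have := prim_le pb (k := j - (i - n)) (ltac:(lia)).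
by rewrite (_ : n - (j - (i - n)) = i - j) //; lia.
Qed.

Lemma term_zero s : ~~ [forall i : 'I_(m + n), band i (s i)] -> term s = r0.
Proof.
move/forallPn => [i hi]; rewrite /term.
exact: (prod_zero (mem_index_enum i) (M_out hi)).
Qed.

Lemma term_bound s : ole (nuval (term s)) (omul (opow A (Sf s)) (opow B (Sg s))).
Proof.
apply: prod_bound => i; case: (boolP (band i (s i))) => h; first exact: M_bound.
by rewrite M_out //; apply: ole_None.
Qed.

Lemma sum_K : \sum_(i < m + n) K i = m * n.
Proof. by rewrite /K sum_if_count cnt_lt. Qed.

Lemma sum_e s : [forall i : 'I_(m + n), band i (s i)] -> Sf s + Sg s = m * n.
Proof.
move/forallP => hb.
have -> : Sf s + Sg s = \sum_(i < m + n) ee i (s i).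
  rewrite /Sf /Sg -big_split; apply: eq_bigr => i _; rewrite /fe /ge.
  by case: (_ < n)%N => /=; rewrite ?addn0.
have h1 : \sum_(i < m + n) (ee i (s i) + s i) = \sum_(i < m + n) (K i + i).
  apply: eq_bigr => i _; have := hb i; rewrite /band /ee /K.
  by case: ifP => hi /andP [h1 h2]; lia.
have h2 : \sum_(i < m + n) (s i : nat) = \sum_(i < m + n) (i : nat).
  by rewrite [RHS](reindex_inj (@perm_inj _ s)).
move: h1; rewrite !big_split /= h2 sum_K => /eqP; rewrite eqn_add2r => /eqP //.
Qed.

Lemma id_unique s : [forall i : 'I_(m + n), band i (s i)] -> Sg s = 0 -> s = 1%g.
Proof.
move=> hb0 hg; have hs := sum_e hb0; rewrite hg addn0 in hs.
move/forallP: hb0 => hb.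
move/eqP: hg; rewrite /Sg sum_nat_eq0 => /forallP hg.
have hle : forall i : 'I_(m + n), fe i (s i) <= K i.
  move=> i; have := hb i; rewrite /fe /ee /K /band; case: ifP => //= _ /andP [h1 h2]; lia.
have := sumnB (index_enum 'I_(m + n)) (P := xpredT) (fun i _ => hle i).
rewrite sum_K -hs subnn => /eqP; rewrite sum_nat_eq0 => /forallP hk.
apply/permP => i; rewrite perm1; apply: val_inj => /=.
have := hk i; have := hg i; have := hb i; rewrite /band /fe /ge /ee /K.
case: ifP => hi /andP [h1 h2] /= /eqP h3 /eqP h4; lia.
Qed.

Definition shf (i : 'I_(m + n)) : 'I_(m + n).
Proof.
refine (@Ordinal _ (if (i < n)%N then i + m else i - n) _).
have := ltn_ord i; case: ifP => hi; lia.
Defined.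

Lemma shf_inj : injective shf.
Proof.
move=> i j /(congr1 val) /=; have := ltn_ord i; have := ltn_ord j.
case: ifP => hi; case: ifP => hj h1 h2 e; apply: val_inj => /=; lia.
Qed.

Definition sh : {perm 'I_(m + n)} := perm shf_inj.

Lemma sh_unique s : [forall i : 'I_(m + n), band i (s i)] -> Sf s = 0 -> s = sh.
Proof.
move=> hb0 hf; have hs := sum_e hb0; rewrite hf add0n in hs.
move/forallP: hb0 => hb.
move/eqP: hf; rewrite /Sf sum_nat_eq0 => /forallP hf.
pose K' (i : 'I_(m + n)) := if (i < n)%N then 0 else n.
have hle : forall i : 'I_(m + n), ge i (s i) <= K' i.
  move=> i; have := hb i; rewrite /ge /K' /ee /K /band; case: ifP => //= hi /andP [h1 h2]; lia.
have hK : \sum_(i < m + n) K' i = m * n.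
  rewrite /K' (eq_bigr (fun i : 'I_(m + n) => if ~~ (i < n)%N then n else 0)).
    by rewrite sum_if_count cnt_ge mulnC.
  by move=> i _; case: ifP.
have := sumnB (index_enum 'I_(m + n)) (P := xpredT) (fun i _ => hle i).
rewrite hK -hs subnn => /eqP; rewrite sum_nat_eq0 => /forallP hk.
apply/permP => i; rewrite permE; apply: val_inj => /=.
have := hk i; have := hf i; have := hb i; rewrite /band /fe /ge /ee /K /K'.
case: ifP => hi /andP [h1 h2] /= /eqP h3 /eqP h4; lia.
Qed.

Lemma term_id : term 1%g = rpow (alpha 0) n.
Proof.
rewrite /term (eq_bigr (fun i : 'I_(m + n) => if (i < n)%N then alpha 0 else r1)).
  by rewrite prod_count cnt_lt.
move=> i _; rewrite perm1 /sylvester; case: ifP => hi.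
  by rewrite leqnn leq_addr subnn.
rewrite subnK ?leqnn ?leq_subr; last by rewrite leqNgt hi.
by rewrite (_ : i - (i - n) = n) ?(prim_m pb) //; move/negbT: hi; rewrite -leqNgt; lia.
Qed.

Lemma term_sh : term sh = rpow (beta 0) m.
Proof.
rewrite /term (eq_bigr (fun i : 'I_(m + n) => if ~~ (i < n)%N then beta 0 else r1)).
  by rewrite prod_count cnt_ge.
move=> i _; rewrite permE /sylvester /=; case: ifP => hi /=.
  by rewrite hi leq_addr leqnn addKn (prim_m pa).
rewrite hi leqnn subnn; move/negbT: hi; rewrite -leqNgt => hi.
by rewrite (_ : i - n <= i - n + n) // leq_addr.
Qed.

End Res.


Section Res2.
Variables (L : toSemiring) (G : toAbGroup).
Notation T := (layered L G).
Notation r0 := (rzero L G).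
Notation r1 := (rone L G).
Notation rad := (@radd L G).
Variables (a b : T) (alpha beta : nat -> T) (m n : nat).
Hypotheses (m0 : (0 < m)%N) (n0 : (0 < n)%N).
Hypotheses (pa : primary a alpha m) (pb : primary b beta n).
Notation A := (nuval a).
Notation B := (nuval b).

Lemma resE : resultant alpha m beta n =
  \big[rad/r0]_(s : {perm 'I_(m + n)}) term alpha beta s.
Proof. by []. Qed.

Lemma nu_term_id : nuval (term alpha beta (1%g : {perm 'I_(m + n)})) = opow A (m * n).
Proof. by rewrite (term_id alpha m0 n0 pb) nuval_rpow (prim_0 pa) opowM. Qed.

Lemma nu_term_sh : nuval (term alpha beta (sh m0 n0)) = opow B (m * n).
Proof. by rewrite (term_sh beta m0 n0 pa) nuval_rpow (prim_0 pb) -opowM mulnC. Qed.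

Lemma res_nu : nuval (resultant alpha m beta n) = opow (omax A B) (m * n).
Proof.
rewrite resE; apply: ole_anti.
  apply: sum_le => s _.
  case: (boolP [forall i : 'I_(m + n), band m n i (s i)]) => hb.
    apply: ole_trans (term_bound m0 n0 pa pb s) _.
    have := pow_bound (Sf s) (Sg s) (omax_l A B) (omax_r A B).
    by rewrite (sum_e m0 n0 hb).
  by rewrite (term_zero alpha beta hb); apply: ole_None.
case: (boolP (olt A B)) => h.
  rewrite omax_eqr // -nu_term_sh; exact: sum_ge (mem_index_enum _).
rewrite omax_eql // -nu_term_id; exact: sum_ge (mem_index_enum _).
Qed.

Lemma olt_None_l (p : option G) : p <> None -> olt None p.
Proof. by case: p. Qed.

Lemma res_gt : olt B A -> resultant alpha m beta n = rpow (alpha 0) n.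
Proof.
move=> h; rewrite resE (@sum_dom _ _ _ _ _ (1%g : {perm 'I_(m + n)})) ?index_enum_uniq ?mem_index_enum ?(term_id alpha m0 n0 pb) //.
move=> s _ ns; rewrite -(term_id alpha m0 n0 pb) nu_ltE nu_term_id.
case: (boolP [forall i : 'I_(m + n), band m n i (s i)]) => hb; last first.
  rewrite (term_zero alpha beta hb); apply: olt_None_l; exact: opow_neq (olt_neq h).
have g0 : (0 < Sg s)%N.
  rewrite lt0n; apply/negP => /eqP e; by rewrite (id_unique m0 n0 hb e) eqxx in ns.
apply: ole_lt_trans (term_bound m0 n0 pa pb s) _.
have := pow_strict (Sf s) h g0; by rewrite (sum_e m0 n0 hb).
Qed.

Lemma res_lt : olt A B -> resultant alpha m beta n = rpow (beta 0) m.
Proof.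
move=> h; rewrite resE (@sum_dom _ _ _ _ _ (sh m0 n0)) ?index_enum_uniq ?mem_index_enum ?(term_sh beta m0 n0 pa) //.
move=> s _ ns; rewrite -(term_sh beta m0 n0 pa) nu_ltE nu_term_sh.
case: (boolP [forall i : 'I_(m + n), band m n i (s i)]) => hb; last first.
  rewrite (term_zero alpha beta hb); apply: olt_None_l; exact: opow_neq (olt_neq h).
have g0 : (0 < Sf s)%N.
  rewrite lt0n; apply/negP => /eqP e; by rewrite (sh_unique m0 n0 hb e) eqxx in ns.
apply: ole_lt_trans (term_bound m0 n0 pa pb s) _; rewrite omulC.
have := pow_strict (Sg s) h g0; by rewrite addnC (sum_e m0 n0 hb).
Qed.
End Res2.

Theorem lemma8p12 (L : toSemiring) (G : toAbGroup)
    (a b : layered L G) (alpha beta : nat -> layered L G) (m n : nat) :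
  (0 < m)%N -> (0 < n)%N ->
  primary a alpha m -> primary b beta n ->
  let res := resultant alpha m beta n in
  let ga := rpow (peval beta n a) m in
  let fb := rpow (peval alpha m b) n in
  let abmn := rpow (radd a b) (m * n) in
  (nu_eq res ga /\ nu_eq ga abmn /\ nu_eq abmn fb) /\
  (nu_lt a b ->
     res = rpow (beta 0%N) m /\ rpow (beta 0%N) m = ga /\
     nu_eq ga (rpow b (m * n)) /\ rpow b (m * n) = abmn /\ abmn = fb) /\
  (nu_lt b a ->
     res = rpow (alpha 0%N) n /\ rpow (alpha 0%N) n = fb /\
     nu_eq fb (rpow a (m * n)) /\ rpow a (m * n) = abmn /\ abmn = ga).
Proof.
move=> m0 n0 pa pb res ga fb abmn.
have eres : nuval res = opow (omax (nuval a) (nuval b)) (m * n) by exact: res_nu.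
have ega : nuval ga = opow (omax (nuval a) (nuval b)) (m * n).
  by rewrite /ga nuval_rpow (peval_nu pb) -opowM omaxC mulnC.
have efb : nuval fb = opow (omax (nuval a) (nuval b)) (m * n).
  by rewrite /fb nuval_rpow (peval_nu pa) -opowM.
have eab : nuval abmn = opow (omax (nuval a) (nuval b)) (m * n).
  by rewrite /abmn nuval_rpow nuval_radd.
split; first by rewrite /nu_eq eres ega eab efb.
split.
  move=> hab; have h : olt (nuval a) (nuval b) by rewrite -nu_ltE.
  have e1 : peval beta n a = beta 0 by exact: (peval_lt pb h).
  have e2 : peval alpha m b = rpow b m by exact: (peval_gt pa h).
  have e3 : radd a b = b by exact: radd_ltr.
  split; first exact: (res_lt m0 n0 pa pb h).
  split; first by rewrite /ga e1.
  split; first by rewrite /nu_eq /ga e1 !nuval_rpow (prim_0 pb) -opowM mulnC.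
  split; first by rewrite /abmn e3.
  by rewrite /abmn /fb e3 e2 rpowM.
move=> hba; have h : olt (nuval b) (nuval a) by rewrite -nu_ltE.
have e1 : peval alpha m b = alpha 0 by exact: (peval_lt pa h).
have e2 : peval beta n a = rpow a n by exact: (peval_gt pb h).
have e3 : radd a b = a by exact: radd_ltl.
split; first exact: (res_gt m0 n0 pa pb h).
split; first by rewrite /fb e1.
split; first by rewrite /nu_eq /fb e1 !nuval_rpow (prim_0 pa) -opowM.
split; first by rewrite /abmn e3.
by rewrite /abmn /ga e3 e2 -rpowM mulnC.
Qed.
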